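(* Let $2\le k\le n-1$ and consider the circulant digraph $C_n(\{1,k\})$ with vertex set $\{v_0,\dots,v_{n-1}\}$. If $n\ge (k-1)\lceil n/k\rceil$, then for every $0\le i\le n-1$, $$d(v_0,v_i)=\left\lfloor \frac{i}{k}\right\rfloor + re(i,k),$$ and moreover $$\mathrm{diam}(C_n(\{1,k\}))=\left\lfloor\frac{n-1}{k}\right\rfloor+\max\{re(n-1,k),\,k-2\}.$$
   Context: For $n\ge 2$ and $S\subseteq\{1,\dots,n-1\}$, the circulant digraph $C_n(S)$ has vertex set $\{v_0,\dots,v_{n-1}\}$ and arcs $v_iv_j$ for all $i,j$ with $j-i\equiv s\pmod n$ for some $s\in S$. $d(x,y)$ denotes the length of a shortest directed $xy$-path and $\mathrm{diam}$ is the maximum of $d(x,y)$ over ordered pairs of vertices. For nonnegative integers $i$ and positive $k$, $re(i,k)$ denotes the remainder of $i$ modulo $k$ (in $\{0,\dots,k-1\}$). *)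

(* Defs.v *)
From mathcomp Require Import all_boot.
Set Implicit Arguments. Unset Strict Implicit. Unset Printing Implicit Defensive.

(* Circulant digraph C_n(S): vertex v_x is represented by the natural x < n.
   Arc v_x -> v_y iff y = (x + s) mod n for some s in S. *)
Definition circ_arc (n : nat) (S : seq nat) : rel nat :=
  fun x y => has (fun s => y == (x + s) %% n) S.

Definition circ_walk (n : nat) (S : seq nat) (x y l : nat) : Prop :=
  exists p : seq nat, [&& path (circ_arc n S) x p, last x p == y & size p == l].

Definition circ_dist_is (n : nat) (S : seq nat) (x y d : nat) : Prop :=
  circ_walk n S x y d /\ forall l, circ_walk n S x y l -> d <= l.

Definition circ_diam_is (n : nat) (S : seq nat) (D : nat) : Prop :=
  (forall x y, x < n -> y < n -> exists2 d, circ_dist_is n S x y d & d <= D) /\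
  (exists x y, [/\ x < n, y < n & circ_dist_is n S x y D]).

(* Main.v *)
Require Import Defs.
From mathcomp Require Import all_boot.
From mathcomp Require Import zify.

Section S.
Variables n k : nat.
Hypothesis k2 : 2 <= k.
Hypothesis kn : k <= n - 1.
Hypothesis hc : (k - 1) * ((n + k - 1) %/ k) <= n.

Local Notation S := [:: 1; k].

Lemma walk_sum x p : path (circ_arc n S) x p ->
  exists a b, a + b = size p /\ last x p %% n = (x + a + b * k) %% n.
Proof.
elim: p x => [|y p IH] x /=.
  by move=> _; exists 0, 0; rewrite !addn0.
case/andP=> hxy /IH [a [b [hs hl]]].
rewrite /circ_arc /= orbF in hxy.
case/orP: hxy => /eqP hy; subst y.
- exists a.+1, b; split; first by rewrite -hs.
  by rewrite hl -addnA modnDml; congr (_ %% _); lia.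
- exists a, b.+1; split; first by rewrite -hs; lia.
  by rewrite hl -addnA modnDml; congr (_ %% _); rewrite mulSn; lia.
Qed.

Lemma walk_step x y z l : circ_arc n S x y -> circ_walk n S y z l ->
  circ_walk n S x z l.+1.
Proof.
move=> hxy [p /and3P [hp hl hs]]; exists (y :: p).
rewrite /= hp hl /= (eqP hs) eqxx !andbT; move: hxy; rewrite /circ_arc /=. done.
Qed.

Lemma walk_ex a b x : x < n -> circ_walk n S x ((x + a + b * k) %% n) (a + b).
Proof.
have n0 : 0 < n by lia.
elim: b x a => [|b IHb] x a hx.
  elim: a x hx => [|a IHa] x hx.
    by exists [::]; rewrite /= !addn0 modn_small // eqxx.
  have -> : x + a.+1 + 0 * k = (x + 1) + a + 0 * k by lia.
  have -> : a.+1 + 0 = (a + 0).+1 by lia.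
  apply: (@walk_step x ((x + 1) %% n)).
    by rewrite /circ_arc /= eqxx.
  have := IHa ((x + 1) %% n) (ltn_pmod _ n0).
  have -> // : (x + 1 + a + 0 * k) %% n = ((x + 1) %% n + a + 0 * k) %% n.
  by symmetry; rewrite -addnA modnDml addnA.
have -> : x + a + b.+1 * k = (x + k) + a + b * k by rewrite mulSn; lia.
have -> : a + b.+1 = (a + b).+1 by lia.
apply: (@walk_step x ((x + k) %% n)).
  by rewrite /circ_arc /= eqxx orbT.
have := IHb ((x + k) %% n) a (ltn_pmod _ n0).
have -> // : (x + k + a + b * k) %% n = ((x + k) %% n + a + b * k) %% n.
by symmetry; rewrite -addnA modnDml addnA.
Qed.

Definition f i := i %/ k + i %% k.

Lemma lower a b j : j < n -> (a + b * k) %% n = j -> f j <= a + b.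
Proof.
move=> hj hm.
rewrite /f.
have k0 : 0 < k by lia.
have em := divn_eq (a + b * k) n.
rewrite hm in em.
move: em hm; set m := a + b * k; set t := m %/ n => em hm.
have ec := divn_eq (n + k - 1) k. have rc := ltn_pmod (n + k - 1) k0.
move: ec rc hc; set c := (n + k - 1) %/ k; set r' := (n + k - 1) %% k => ec rc hc'.
clearbody c r'.
have hck : n <= c * k by lia.
have ei := divn_eq j k. have ri := ltn_pmod j k0.
have eM := divn_eq m k. have rM := ltn_pmod m k0.
move: eM rM ei ri; set Q := m %/ k; set R := m %% k; set q := j %/ k; set r := j %% k => eM rM ei ri.
have em' : m = a + b * k by [].
clearbody Q R q r t m.
rewrite -/q -/r.
have h1 : t * n <= t * (c * k) := leq_mul (leqnn t) hck.
have hQ : Q <= t * c + q.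
  rewrite -ltnS -(ltn_pmul2r k0) !mulSn !mulnDl -mulnA.
  lia.
have hb : b <= Q.
  rewrite -ltnS -(ltn_pmul2r k0) !mulSn. lia.
have h2 : (k - 1) * c * t <= n * t := leq_mul hc' (leqnn t).
have h3 : (k - 1) * Q <= (k - 1) * (t * c + q) := leq_mul (leqnn _) hQ.
have h4 : (k - 1) * b <= (k - 1) * Q := leq_mul (leqnn _) hb.
rewrite mulnDr in h3.
have e1 : forall u, (k - 1) * u + u = u * k.
  by move=> u; rewrite mulnC -mulnSr subn1 prednK.
have e5 := e1 q. have e6 := e1 b. rewrite -mulnA [c * t]mulnC in h2.
lia.
Qed.

Lemma dist x y : x < n -> y < n -> circ_dist_is n S x y (f ((y + n - x) %% n)).
Proof.
move=> hx hy.
have n0 : 0 < n by lia.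
set j := (y + n - x) %% n.
have hxj : (x + j) %% n = y.
  by rewrite /j modnDmr (_ : x + (y + n - x) = y + n) ?modnDr ?modn_small //; lia.
split.
  have := walk_ex (j %% k) (j %/ k) x hx.
  by rewrite -addnA [_ + _ * _]addnC -divn_eq hxj /f addnC.
move=> l [p /and3P [hp /eqP hl /eqP hs]].
have [a [b [hab hm]]] := walk_sum x p hp.
rewrite hl modn_small // in hm.
rewrite -hs -hab; apply: lower; first by rewrite /j ltn_pmod.
apply/eqP; rewrite /j -modn_mod -(eqn_modDl x) modnDmr (_ : x + (y + n - x) = y + n); last by lia.
rewrite modnDr addnA -hm. by rewrite modn_small.
Qed.

Lemma fle j : j < n -> f j <= (n - 1) %/ k + maxn ((n - 1) %% k) (k - 2).
Proof.
move=> hj; rewrite /f.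
have k0 : 0 < k by lia.
have hq : j %/ k <= (n - 1) %/ k by apply: leq_div2r; lia.
have ei := divn_eq j k. have ri := ltn_pmod j k0.
have eN := divn_eq (n - 1) k. have rN := ltn_pmod (n - 1) k0.
move: hq ei ri eN rN; set q := j %/ k; set r := j %% k; set Q := (n - 1) %/ k;
  set R := (n - 1) %% k => hq ei ri eN rN.
clearbody q r Q R.
case: (ltnP q Q) => hqQ; first by lia.
have eqQ : q = Q by lia.
subst q. lia.
Qed.

Lemma main :
  (forall i, i < n -> circ_dist_is n S 0 i (i %/ k + i %% k)) /\
  circ_diam_is n S ((n - 1) %/ k + maxn ((n - 1) %% k) (k - 2)).
Proof.
have n0 : 0 < n by lia.
have k0 : 0 < k by lia.
split.
  move=> i hi; have := dist 0 i n0 hi.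
  by rewrite subn0 modnDr modn_small.
split.
  move=> x y hx hy; exists (f ((y + n - x) %% n)); first exact: dist.
  by apply: fle; rewrite ltn_pmod.
have hQ : 1 <= (n - 1) %/ k.
  by have := leq_div2r k kn; rewrite divnn k0.
case: (leqP (k - 2) ((n - 1) %% k)) => hR.
  exists 0, (n - 1); split; [done | lia |].
  have := dist 0 (n - 1) n0 (ltac:(lia)).
  rewrite subn0 modnDr modn_small; last by lia.
  by [].
set Q := (n - 1) %/ k.
exists 0, ((Q - 1) * k + (k - 1)); split; first done.
  have := leq_divM (n - 1) k; rewrite -/Q. 
  have : (Q - 1) * k + k = Q * k by rewrite -mulSnr subn1 prednK.
  lia.
have hy : (Q - 1) * k + (k - 1) < n.
  have := leq_divM (n - 1) k; rewrite -/Q. 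
  have : (Q - 1) * k + k = Q * k by rewrite -mulSnr subn1 prednK.
  lia.
have := dist 0 _ n0 hy.
rewrite subn0 modnDr modn_small // /f divnMDl // modnMDl divn_small ?modn_small; try lia.
by have -> : Q - 1 + 0 + (k - 1) = Q + (k - 2) by lia.
Qed.
End S.

Theorem lemma8 (n k : nat) :
  2 <= k -> k <= n - 1 ->
  (k - 1) * ((n + k - 1) %/ k) <= n ->
  (forall i, i < n -> circ_dist_is n [:: 1; k] 0 i (i %/ k + i %% k)) /\
  circ_diam_is n [:: 1; k] ((n - 1) %/ k + maxn ((n - 1) %% k) (k - 2)).
Proof. move=> k2 kn hc; exact: main. Qed.
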